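(* Fix a positive integer $n$, a covertness threshold $\delta>0$, and risk budgets $\epsilon_{\text{cov}},\epsilon_{\text{rel}}\in(0,1)$. Let $(\eta,\overline{n}_B)$ be a random pair (with arbitrary joint distribution) taking values in $(0,1)\times[0,\infty)$, and let $c_{\text{cov}}=c_{\text{cov}}(\eta,\overline{n}_B)$ and $R_{\text{ach}}=R_{\text{ach}}(\eta,\overline{n}_B)$ be the induced random variables (defined in the context). Consider the risk-constrained program \[ \max_{q,R}\; T(q,R)=qR \quad\text{s.t.}\quad \mathbb{P}\!\left[q>\tfrac{2\delta}{\sqrt{n}}\,c_{\text{cov}}\right]\le\epsilon_{\text{cov}},\quad \mathbb{P}\!\left[R>R_{\text{ach}}\right]\le\epsilon_{\text{rel}},\quad 0\le q\le 1,\ 0\le R\le 1. \] For a real random variable $X$ define $F_X^{<}(x)=\mathbb{P}[X<x]$ and $Q_X^{<}(\epsilon)=\sup\{x\in\mathbb{R}: F_X^{<}(x)\le\epsilon\}$. Set \[ q_{\max}=\min\!\left\{1,\ \frac{2\delta}{\sqrt{n}}\,Q^{<}_{c_{\text{cov}}}(\epsilon_{\text{cov}})\right\},\qquad R_{\max}=Q^{<}_{R_{\text{ach}}}(\epsilon_{\text{rel}}). \] Then an optimal strategy is $(q^*,R^* )=(q_{\max},R_{\max})$, and the maximum per-use covert throughput is $T^*=q^*R^*=q_{\max}R_{\max}$. This holds for arbitrary distributions of $(\eta,\overline{n}_B)$, including cases where the distributions of $c_{\text{cov}}$ or $R_{\text{ach}}$ have atoms.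
   Context: Definitions: for $\eta\in(0,1)$ and $\overline{n}_B\ge0$, the covertness constant is $c_{\text{cov}}(\eta,\overline{n}_B)=\dfrac{\sqrt{2\eta\overline{n}_B(1+\eta\overline{n}_B)}}{1-\eta}$. The depolarizing probability is $p(\eta,\overline{n}_B)=1-\dfrac{\eta}{[1+(1-\eta)\overline{n}_B]^4}$, with Pauli error vector $\vec p=(1-\tfrac{3p}{4},\tfrac p4,\tfrac p4,\tfrac p4)$ and Shannon entropy $H(\vec p)=-\sum_i p_i\log_2 p_i$ (with $0\log 0=0$). The instantaneous achievable rate is $R_{\text{ach}}(\eta,\overline{n}_B)=(1-H(\vec p(\eta,\overline{n}_B)))^+$, where $(x)^+=\max(x,0)$. Here $q$ is the per-channel-use transmission probability and $R$ is the chosen code rate; all probabilities are over the randomness of $(\eta,\overline{n}_B)$. *)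

(* Defs.v *)
From HB Require Import structures.
From mathcomp Require Import all_boot all_order all_algebra.
From mathcomp Require Import all_classical all_reals all_analysis.
Set Implicit Arguments. Unset Strict Implicit. Unset Printing Implicit Defensive.
Import Order.TTheory GRing.Theory Num.Theory.
Import numFieldNormedType.Exports.
Local Open Scope classical_set_scope.
Local Open Scope ring_scope.

Section Defs.
Variable R : realType.

Definition c_cov (eta nB : R) : R :=
  Num.sqrt (2 * eta * nB * (1 + eta * nB)) / (1 - eta).

Definition p_dep (eta nB : R) : R :=
  1 - eta / (1 + (1 - eta) * nB) ^+ 4.

Definition pauli_vec (p : R) : seq R :=
  [:: 1 - 3 * p / 4; p / 4; p / 4; p / 4].

Definition xlog2x (x : R) : R := if x == 0 then 0 else x * (ln x / ln 2).

Definition shannonH (v : seq R) : R := - \sum_(x <- v) xlog2x x.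

Definition R_ach (eta nB : R) : R :=
  Num.max (1 - shannonH (pauli_vec (p_dep eta nB))) 0.

Definition cdf_lt d (T : measurableType d) (P : probability T R)
  (X : T -> R) (x : R) : \bar R := P [set w | X w < x].

Definition quantile_lt d (T : measurableType d) (P : probability T R)
  (X : T -> R) (eps : R) : R :=
  sup [set x : R | (cdf_lt P X x <= eps%:E)%E].

Definition feasible d (T : measurableType d) (P : probability T R)
  (eta nB : T -> R) (n : nat) (delta eps_cov eps_rel : R) (q Rc : R) : Prop :=
  [/\ (P [set w | (q > 2 * delta / Num.sqrt (n%:R) * c_cov (eta w) (nB w))%R]
        <= eps_cov%:E)%E,
      (P [set w | (Rc > R_ach (eta w) (nB w))%R] <= eps_rel%:E)%E,
      (0 <= q <= 1)%R & (0 <= Rc <= 1)%R].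

Definition q_max d (T : measurableType d) (P : probability T R)
  (eta nB : T -> R) (n : nat) (delta eps_cov : R) : R :=
  Num.min 1 (2 * delta / Num.sqrt (n%:R) *
             quantile_lt P (fun w => c_cov (eta w) (nB w)) eps_cov).

Definition R_max d (T : measurableType d) (P : probability T R)
  (eta nB : T -> R) (eps_rel : R) : R :=
  quantile_lt P (fun w => R_ach (eta w) (nB w)) eps_rel.

End Defs.

(* Main.v *)
Require Import Defs.
From HB Require Import structures.
From mathcomp Require Import all_boot all_order all_algebra.
From mathcomp Require Import all_classical all_reals all_analysis.
From mathcomp Require Import lra.
Import Order.TTheory GRing.Theory Num.Theory.
Import numFieldNormedType.Exports.
Local Open Scope classical_set_scope.
Local Open Scope ring_scope.

Section Q.
Variables (R : realType) (d : measure_display) (T : measurableType d)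
  (P : probability T R).

Lemma mlt (X : T -> R) (mX : measurable_fun setT X) x :
  measurable [set w | X w < x].
Proof.
have := mX measurableT _ (measurable_itv `]-oo, x[); rewrite setTI.
congr measurable; apply/seteqP; split => w /=; rewrite in_itv /=; by [].
Qed.

Lemma Pmono (A B : set T) : measurable A -> measurable B -> A `<=` B ->
  (P A <= P B)%E.
Proof. by move=> mA mB AB; apply: le_measure => //; rewrite inE. Qed.

Lemma cdf_mono (X : T -> R) (mX : measurable_fun setT X) x y : x <= y ->
  (cdf_lt P X x <= cdf_lt P X y)%E.
Proof.
move=> xy; apply: Pmono; try exact: mlt.
by move=> w /= h; exact: lt_le_trans h xy.
Qed.

Lemma lim_le_eps (f : nat -> \bar R) l c : f @ \oo --> l ->
  (forall n, (f n <= c)%E) -> (l <= c)%E.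
Proof.
move=> fl fc; rewrite -(cvg_lim _ fl) //; apply: lime_le.
  by apply/cvg_ex; exists l.
by near=> n; exact: fc.
Unshelve. all: by end_near.
Qed.

Lemma quantile_props (X : T -> R) (mX : measurable_fun setT X)
  (X0 : forall w, 0 <= X w) eps (e1 : eps < 1) (e0 : 0 <= eps) :
  let S := [set x | (cdf_lt P X x <= eps%:E)%E] in
  [/\ has_sup S, S (sup S) & S 0].
Proof.
move=> S.
have S0 : S 0.
  rewrite /S /= /cdf_lt (_ : [set w | X w < 0] = set0) ?measure0 ?lee_fin //.
  by apply/seteqP; split => w //=; rewrite ltNge X0.
have [N HN] : exists N : nat, ~ S N%:R.
  apply: contrapT => H.
  have HS : forall n : nat, S n%:R.
    by move=> n; apply: contrapT => Hn; apply: H; exists n.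
  have : (P setT <= eps%:E)%E.
    apply: (@lim_le_eps (fun n => P [set w | X w < n%:R])); last exact: HS.
    have -> : [set: T] = \bigcup_n [set w | X w < n%:R].
      apply/seteqP; split => w // _.
      by exists (Num.Def.archi_bound (X w)) => //=; exact: archi_boundP.
    apply: nondecreasing_cvg_mu.
    - by move=> n; exact: mlt.
    - by apply: bigcup_measurable => n _; exact: mlt.
    - move=> n m nm; apply/subsetPset => w /= h; apply: lt_le_trans h _; by rewrite ler_nat.
  by rewrite probability_setT lee_fin leNgt e1.
have ub : ubound S N%:R.
  move=> s Ss; rewrite leNgt; apply/negP => Ns; apply: HN.
  rewrite /S /=; apply: (le_trans (@cdf_mono X mX _ _ (ltW Ns))); exact: Ss.
have hs : has_sup S by split; [exists 0|exists N%:R].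
split => //.
pose G k := [set w | X w < sup S - k.+1%:R^-1].
rewrite /S /= /cdf_lt.
have -> : [set w | X w < sup S] = \bigcup_k G k.
  apply/seteqP; split => w /=.
    move=> h; have [k hk] := ltr_add_invr h; exists k => //.
    by rewrite /G /= ltrBrDl addrC.
  move=> [k _]; rewrite /G /= => h; apply: lt_le_trans h _.
  by rewrite lerBlDr lerDl invr_ge0.
apply: (@lim_le_eps (fun n => P (G n))).
  apply: nondecreasing_cvg_mu.
  - by move=> n; exact: mlt.
  - by apply: bigcup_measurable => n _; exact: mlt.
  - move=> n m nm; apply/subsetPset => w; rewrite /G /= => h; apply: lt_le_trans h _.
    rewrite lerB // lef_pV2 ?posrE ?ler_nat //.
move=> k.
have k0 : 0 < k.+1%:R^-1 :> R by rewrite invr_gt0 ltr0Sn.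
have [s Ss hs'] := sup_adherent k0 hs.
apply: le_trans Ss; apply: Pmono; try exact: mlt.
by move=> w; rewrite /G /= => h; exact: lt_trans h hs'.
Qed.
End Q.

Lemma measurable_inv (R : realType) : measurable_fun setT (@GRing.inv R).
Proof.
have oD : open (~` [set (0:R)]).
  rewrite openC; apply: accessible_closed_set1; apply: hausdorff_accessible.
  exact: norm_hausdorff.
have cD : {in ~` [set (0:R)], continuous (@GRing.inv R)}.
  move=> x; rewrite inE /= => /eqP x0; exact: inv_continuous.
have mD := measurable_realfun.open_continuous_measurable_fun oD cD.
move=> _ Y mY; rewrite setTI.
have -> : (@GRing.inv R) @^-1` Y =
   ((~` [set 0]) `&` GRing.inv @^-1` Y) `|` ([set 0] `&` GRing.inv @^-1` Y).
  by rewrite -setIUl setUC setUv setTI.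
apply: measurableU; first exact: mD (measurableC (measurable_set1 _)) _ mY.
case: (pselect (Y 0)) => Y0.
  rewrite (_ : _ `&` _ = [set 0]); first exact: measurable_set1.
  by apply/seteqP; split => [x [] //|x /= ->]; split => //=; rewrite invr0.
rewrite (_ : _ `&` _ = set0) //.
by apply/seteqP; split => [x [/= -> ]|x //]; rewrite /preimage /= invr0.
Qed.

Section M.
Variables (R : realType) (d : measure_display) (T : measurableType d).

Lemma mV (g : T -> R) : measurable_fun setT g ->
  measurable_fun setT (fun w => (g w)^-1).
Proof. by move=> mg; exact: (measurableT_comp (measurable_inv R) mg). Qed.

Lemma mxlog (g : T -> R) : measurable_fun setT g ->
  measurable_fun setT (fun w => xlog2x (g w)).
Proof.
move=> mg.
have -> : (@xlog2x R) = (fun x => x * (ln x * (ln 2)^-1)).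
  apply/funext => x; rewrite /xlog2x; case: eqP => [->|//]; by rewrite mul0r.
have mf : measurable_fun setT (fun x : R => x * (ln x * (ln 2)^-1)).
  apply: measurable_realfun.measurable_funM; first exact: measurable_id.
  apply: measurable_realfun.measurable_funM; first exact: measurable_realfun.measurable_ln.
  exact: measurable_cst.
exact: (measurableT_comp mf mg).
Qed.

Lemma msqrt (g : T -> R) : measurable_fun setT g ->
  measurable_fun setT (fun w => Num.sqrt (g w)).
Proof.
move=> mg.
exact: (measurableT_comp (measurable_realfun.continuous_measurable_fun (@sqrt_continuous R)) mg).
Qed.

End M.

Ltac mtac := repeat first [ exact: measurable_cst | assumption
  | apply: measurable_realfun.measurable_funM | apply: measurable_realfun.measurable_funD | apply: measurable_realfun.measurable_funB
  | apply: measurable_realfun.measurable_funN | apply: mV | apply: mxlog | apply: msqrt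
  | apply: measurable_realfun.measurable_maxr | apply: measurable_realfun.measurable_funX ].

Lemma mC (R : realType) (d : measure_display) (T : measurableType d)
  (eta nB : T -> R) : measurable_fun setT eta -> measurable_fun setT nB ->
  measurable_fun setT (fun w => c_cov (eta w) (nB w)).
Proof. move=> me mn; rewrite /c_cov; mtac. Qed.

Lemma mRA (R : realType) (d : measure_display) (T : measurableType d)
  (eta nB : T -> R) : measurable_fun setT eta -> measurable_fun setT nB ->
  measurable_fun setT (fun w => R_ach (eta w) (nB w)).
Proof.
move=> me mn; rewrite /R_ach /shannonH /pauli_vec /p_dep.
under eq_fun do rewrite !big_cons big_nil.
mtac.
Qed.

Lemma xlog_le0 (R : realType) (x : R) : 0 <= x <= 1 -> xlog2x x <= 0.
Proof.
case/andP => x0 x1; rewrite /xlog2x; case: eqP => // _.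
apply: mulr_ge0_le0 => //; apply: mulr_le0_ge0; first exact: ln_le0.
by rewrite invr_ge0 ltW // ln_gt0 // ltr1n.
Qed.

Lemma R_ach_le1 (R : realType) (e n : R) : 0 < e < 1 -> 0 <= n ->
  R_ach e n <= 1.
Proof.
case/andP => e0 e1 n0.
set D := (1 + (1 - e) * n) ^+ 4.
have D1 : 1 <= D.
  rewrite /D exprn_ege1 // lerDl mulr_ge0 // subr_ge0 ltW //.
have D0 : 0 < D by exact: lt_le_trans ltr01 D1.
have q0 : 0 <= e / D by rewrite divr_ge0 // ltW.
have q1 : e / D <= 1.
  by rewrite ler_pdivrMr // mul1r (le_trans (ltW e1)).
set p := p_dep e n.
have p0 : 0 <= p by rewrite /p /p_dep subr_ge0.
have p1 : p <= 1 by rewrite /p /p_dep lerBlDr lerDl.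
rewrite /R_ach ge_max ler01 andbT lerBlDr lerDl /shannonH oppr_ge0.
rewrite /pauli_vec !big_cons big_nil addr0.
have h4 : 0 <= p / 4 <= 1.
  apply/andP; split; first by rewrite divr_ge0.
  by rewrite ler_pdivrMr // mul1r (le_trans p1) // ler1n.
have h1 : 0 <= 1 - 3 * p / 4 <= 1.
  apply/andP; split.
    rewrite subr_ge0 ler_pdivrMr // mul1r.
    by apply: le_trans (ler_wpM2l _ p1) _; rewrite ?mulr1 ?ler_nat.
  by rewrite lerBlDr lerDl divr_ge0 // mulr_ge0.
by have := @xlog_le0 R _ h1; have := @xlog_le0 R _ h4; lra.
Qed.

Theorem theorem1 (R : realType) (d : measure_display) (T : measurableType d)
  (P : probability T R) (eta nB : T -> R)
  (meas_eta : measurable_fun setT eta) (meas_nB : measurable_fun setT nB)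
  (range_eta : forall w, 0 < eta w < 1) (range_nB : forall w, 0 <= nB w)
  (n : nat) (n_pos : (0 < n)%N) (delta : R) (delta_pos : 0 < delta)
  (eps_cov eps_rel : R) (heps_cov : 0 < eps_cov < 1) (heps_rel : 0 < eps_rel < 1) :
  feasible P eta nB n delta eps_cov eps_rel
    (q_max P eta nB n delta eps_cov) (R_max P eta nB eps_rel) /\
  (forall q Rc : R, feasible P eta nB n delta eps_cov eps_rel q Rc ->
     q * Rc <= q_max P eta nB n delta eps_cov * R_max P eta nB eps_rel).
Proof.
set k := 2 * delta / Num.sqrt n%:R.
have k0 : 0 < k.
  by rewrite /k divr_gt0 ?mulr_gt0 // sqrtr_gt0 ltr0n.
set C := fun w => c_cov (eta w) (nB w).
set RA := fun w => R_ach (eta w) (nB w).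
have mCf : measurable_fun setT C by exact: mC.
have mRf : measurable_fun setT RA by exact: mRA.
have C0 : forall w, 0 <= C w.
  move=> w; rewrite /C /c_cov divr_ge0 ?sqrtr_ge0 // subr_ge0.
  by case/andP: (range_eta w) => _ /ltW.
have RA0 : forall w, 0 <= RA w by move=> w; rewrite /RA /R_ach le_max lexx orbT.
have RA1 : forall w, RA w <= 1 by move=> w; exact: R_ach_le1.
case/andP: heps_cov => ec0 ec1; case/andP: heps_rel => er0 er1.
have [hsC SC SC0] := @quantile_props R d T P C mCf C0 eps_cov ec1 (ltW ec0).
have [hsR SR SR0] := @quantile_props R d T P RA mRf RA0 eps_rel er1 (ltW er0).
set QC := sup _ in SC hsC.
set QR := sup _ in SR hsR.
have QC0 : 0 <= QC by exact: sup_upper_bound.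
have QR0 : 0 <= QR by exact: sup_upper_bound.
have QR1 : QR <= 1.
  apply: ge_sup; first by exists 0.
  move=> s Ss; rewrite leNgt; apply/negP => s1.
  move: Ss; rewrite /= /cdf_lt (_ : [set w | RA w < s] = setT).
    by rewrite probability_setT lee_fin leNgt er1.
  by apply/seteqP; split => w //= _; exact: le_lt_trans (RA1 w) s1.
have eqQ : quantile_lt P C eps_cov = QC by [].
have eqR : R_max P eta nB eps_rel = QR by [].
have eqq : q_max P eta nB n delta eps_cov = Num.min 1 (k * QC) by [].
rewrite eqq eqR.
split.
  split.
  - set qm := Num.min 1 (k * QC).
    have -> : [set w | k * c_cov (eta w) (nB w) < qm] = [set w | C w < k^-1 * qm].
      by apply/seteqP; split => w /=; rewrite ltr_pdivlMl.
    apply: le_trans SC; apply: Pmono; try exact: mlt.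
    move=> w /= h; apply: lt_le_trans h _.
    by rewrite ler_pdivrMl // /qm ge_min lexx orbT.
  - exact: SR.
  - apply/andP; split; first by rewrite le_min ler01 mulr_ge0 // ltW.
    by rewrite ge_min lexx.
  - by rewrite QR0 QR1.
move=> q Rc [hq hR /andP[q0 q1] /andP[R0 R1]].
apply: ler_pM => //.
  rewrite le_min q1 /= -ler_pdivrMl //; apply: sup_upper_bound => //.
  rewrite /= /cdf_lt.
  have -> : [set w | C w < k^-1 * q] = [set w | k * c_cov (eta w) (nB w) < q].
    by apply/seteqP; split => w /=; rewrite ltr_pdivlMl.
  exact: hq.
exact: sup_upper_bound.
Qed.
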